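(* Let $X$ be an AM-space such that the closed unit ball $\mathbf B(X)$ is the norm closed solid convex hull of finitely many of its elements. Then $X$ is lattice isometric to $C(K)$ for some compact Hausdorff space $K$.
   Context: An AM-space is a Banach lattice whose norm satisfies $\|x\vee y\|=\max(\|x\|,\|y\|)$ for all $x,y\ge0$. The solid convex hull of $S$ is the smallest convex set $D\supseteq S$ such that $x\in X$, $z\in D$, $|x|\le|z|$ imply $x\in D$. *)

(* Defs.v *)
From Stdlib Require Import Reals List.
Open Scope R_scope.

Record BanachLattice := {
  bl_car :> Type;
  bl_zero : bl_car;
  bl_add : bl_car -> bl_car -> bl_car;
  bl_opp : bl_car -> bl_car;
  bl_scal : R -> bl_car -> bl_car;
  bl_le : bl_car -> bl_car -> Prop;
  bl_sup : bl_car -> bl_car -> bl_car;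
  bl_inf : bl_car -> bl_car -> bl_car;
  bl_norm : bl_car -> R;
  bl_addA : forall x y z, bl_add x (bl_add y z) = bl_add (bl_add x y) z;
  bl_addC : forall x y, bl_add x y = bl_add y x;
  bl_add0 : forall x, bl_add x bl_zero = x;
  bl_addN : forall x, bl_add x (bl_opp x) = bl_zero;
  bl_scal1 : forall x, bl_scal 1 x = x;
  bl_scalA : forall a b x, bl_scal a (bl_scal b x) = bl_scal (a * b) x;
  bl_scalDr : forall a x y, bl_scal a (bl_add x y) = bl_add (bl_scal a x) (bl_scal a y);
  bl_scalDl : forall a b x, bl_scal (a + b) x = bl_add (bl_scal a x) (bl_scal b x);
  bl_le_refl : forall x, bl_le x x;
  bl_le_antisym : forall x y, bl_le x y -> bl_le y x -> x = y;
  bl_le_trans : forall x y z, bl_le x y -> bl_le y z -> bl_le x z;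
  bl_le_add : forall x y z, bl_le x y -> bl_le (bl_add x z) (bl_add y z);
  bl_le_scal : forall a x y, 0 <= a -> bl_le x y -> bl_le (bl_scal a x) (bl_scal a y);
  bl_sup_l : forall x y, bl_le x (bl_sup x y);
  bl_sup_r : forall x y, bl_le y (bl_sup x y);
  bl_sup_least : forall x y z, bl_le x z -> bl_le y z -> bl_le (bl_sup x y) z;
  bl_inf_l : forall x y, bl_le (bl_inf x y) x;
  bl_inf_r : forall x y, bl_le (bl_inf x y) y;
  bl_inf_greatest : forall x y z, bl_le z x -> bl_le z y -> bl_le z (bl_inf x y);
  bl_norm_eq0 : forall x, bl_norm x = 0 -> x = bl_zero;
  bl_normZ : forall a x, bl_norm (bl_scal a x) = Rabs a * bl_norm x;
  bl_normD : forall x y, bl_norm (bl_add x y) <= bl_norm x + bl_norm y;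
  bl_norm_mono : forall x y,
    bl_le (bl_sup x (bl_opp x)) (bl_sup y (bl_opp y)) -> bl_norm x <= bl_norm y;
  bl_complete : forall u : nat -> bl_car,
    (forall eps, eps > 0 -> exists N, forall n m, (n >= N)%nat -> (m >= N)%nat ->
        bl_norm (bl_add (u n) (bl_opp (u m))) < eps) ->
    exists l, forall eps, eps > 0 -> exists N, forall n, (n >= N)%nat ->
        bl_norm (bl_add (u n) (bl_opp l)) < eps
}.

Arguments bl_zero {_}.
Arguments bl_add {_}.
Arguments bl_opp {_}.
Arguments bl_scal {_}.
Arguments bl_le {_}.
Arguments bl_sup {_}.
Arguments bl_inf {_}.
Arguments bl_norm {_}.

Definition bl_abs {X : BanachLattice} (x : X) : X := bl_sup x (bl_opp x).

Definition AM_space (X : BanachLattice) : Prop :=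
  forall x y : X, bl_le bl_zero x -> bl_le bl_zero y ->
    bl_norm (bl_sup x y) = Rmax (bl_norm x) (bl_norm y).

Definition convex_set {X : BanachLattice} (D : X -> Prop) : Prop :=
  forall x y t, D x -> D y -> 0 <= t <= 1 ->
    D (bl_add (bl_scal t x) (bl_scal (1 - t) y)).

Definition solid_set {X : BanachLattice} (D : X -> Prop) : Prop :=
  forall x z, D z -> bl_le (bl_abs x) (bl_abs z) -> D x.

Definition solid_convex_hull {X : BanachLattice} (S : X -> Prop) : X -> Prop :=
  fun x => forall D : X -> Prop, convex_set D -> solid_set D ->
    (forall s, S s -> D s) -> D x.

Definition norm_closure {X : BanachLattice} (A : X -> Prop) : X -> Prop :=
  fun x => forall eps, eps > 0 -> exists a, A a /\ bl_norm (bl_add x (bl_opp a)) < eps.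

Definition unit_ball (X : BanachLattice) : X -> Prop := fun x => bl_norm x <= 1.

Record TopSpace := {
  ts_car :> Type;
  ts_open : (ts_car -> Prop) -> Prop;
  ts_open_full : ts_open (fun _ => True);
  ts_open_inter : forall U V, ts_open U -> ts_open V -> ts_open (fun x => U x /\ V x);
  ts_open_union : forall (I : Type) (U : I -> ts_car -> Prop),
    (forall i, ts_open (U i)) -> ts_open (fun x => exists i, U i x)
}.
Arguments ts_open {_}.

Definition compact_space (K : TopSpace) : Prop :=
  forall (I : Type) (U : I -> K -> Prop),
    (forall i, ts_open (U i)) -> (forall k, exists i, U i k) ->
    exists l : list I, forall k, exists i, In i l /\ U i k.

Definition hausdorff_space (K : TopSpace) : Prop :=
  forall x y : K, x <> y -> exists U V, ts_open U /\ ts_open V /\ U x /\ V y /\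
    (forall z, ~ (U z /\ V z)).

Definition continuous_fun {K : TopSpace} (f : K -> R) : Prop :=
  forall k eps, eps > 0 -> exists U, ts_open U /\ U k /\
    forall y, U y -> Rabs (f y - f k) < eps.

(** sup norm on C(K) (the value 0 is included so that C(empty) = {0} has norm 0) *)
Definition sup_norm_is {K : TopSpace} (f : K -> R) (r : R) : Prop :=
  is_lub (fun s => s = 0 \/ exists k, s = Rabs (f k)) r.

Definition lattice_isometry_onto_CK (X : BanachLattice) (K : TopSpace) (T : X -> K -> R) : Prop :=
  (forall x, continuous_fun (T x)) /\
  (forall x y k, T (bl_add x y) k = T x k + T y k) /\
  (forall a x k, T (bl_scal a x) k = a * T x k) /\
  (forall x y, (forall k, T x k = T y k) -> x = y) /\
  (forall f : K -> R, continuous_fun f -> exists x, forall k, T x k = f k) /\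
  (forall x y k, T (bl_sup x y) k = Rmax (T x k) (T y k)) /\
  (forall x y k, T (bl_inf x y) k = Rmin (T x k) (T y k)) /\
  (forall x, sup_norm_is (T x) (bl_norm x)).

(* Main.v *)
Require Import Defs.
From Stdlib Require Import Reals List.
From mathcomp Require classical_sets.
From Stdlib Require Import Lra Classical FunctionalExtensionality ProofIrrelevance IndefiniteDescription ZArith.
Open Scope R_scope.


Module ZW.
Import mathcomp.classical.classical_sets.
Local Open Scope classical_set_scope.
Lemma my_zorn (T : Type) (P : (T -> Prop) -> Prop) (A0 : T -> Prop) (x0 : T) :
  P A0 -> A0 x0 ->
  (forall F : (T -> Prop) -> Prop, (exists A, F A) -> (forall A, F A -> P A) ->
     (forall A B, F A -> F B -> (forall x, A x -> B x) \/ (forall x, B x -> A x)) ->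
     P (fun x => exists A, F A /\ A x)) ->
  exists A, P A /\ forall B, (forall x, A x -> B x) -> P B -> forall x, B x -> A x.
Proof.
intros PA0 Ax0 H.
destruct (@Zorn_bigcup T (fun A : T -> Prop => (forall x, ~ A x) \/ P A)) as [A [PA Amax]].
- intros F FP tot.
  destruct (classic (exists A, F A /\ P A)) as [[A1 [FA1 PA1]]|Hn].
  + right.
    assert (E: (\bigcup_(X in F) X) = (fun x => exists A, (F A /\ P A) /\ A x)).
    { apply boolp.funext; intro x; apply boolp.propext; split.
      - intros [A FA Ax]. exists A. split; [split|]; auto.
        destruct (FP A FA) as [Hem|HP]; [exfalso; exact (Hem x Ax)|exact HP].
      - intros [A [[FA _] Ax]]. exists A; auto. }
    rewrite E. apply H.
    * exists A1; split; auto.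
    * intros A [_ HA]; exact HA.
    * intros A B [FA _] [FB _]. destruct (tot A B FA FB); [left|right]; auto.
  + left. intros x [A FA Ax]. apply Hn. exists A. split; auto.
    destruct (FP A FA) as [Hem|HP]; [exfalso; exact (Hem x Ax)|exact HP].
- assert (PA' : P A).
  { destruct PA as [Hem|HP]; auto. exfalso. apply (Amax A0).
    + split. intros x Ax; exfalso; exact (Hem x Ax).
      intro Hs. exact (Hem x0 (Hs x0 Ax0)).
    + right; exact PA0. }
  exists A. split; auto.
  intros B AB PB. apply NNPP; intro Hn.
  apply (Amax B); [|right; exact PB].
  split; [exact AB|]. intro BA. apply Hn. exact BA.
Qed.
End ZW.


Section Alg.
Variable X : BanachLattice.
Notation "x <+> y" := (@bl_add X x y) (at level 50, left associativity).
Notation "a <.> x" := (@bl_scal X a x) (at level 40).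
Notation "x <<= y" := (@bl_le X x y) (at level 70).
Notation "x \v y" := (@bl_sup X x y) (at level 45, left associativity).
Notation "x \^ y" := (@bl_inf X x y) (at level 45, left associativity).
Notation "'--' x" := (@bl_opp X x) (at level 35, right associativity).
Notation "'O'" := (@bl_zero X).

Lemma add0l (x : X) : O <+> x = x.
Proof. rewrite bl_addC; apply bl_add0. Qed.
Lemma addNl (x : X) : -- x <+> x = O.
Proof. rewrite bl_addC; apply bl_addN. Qed.
Lemma add_cancel_l (x y z : X) : z <+> x = z <+> y -> x = y.
Proof. intro H. rewrite <- (add0l x), <- (add0l y), <- (addNl z), <- !bl_addA, H. reflexivity. Qed.
Lemma add_cancel_r (x y z : X) : x <+> z = y <+> z -> x = y.
Proof. intro H. apply (add_cancel_l _ _ z). rewrite (bl_addC _ z x), (bl_addC _ z y). exact H. Qed.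
Lemma inv_uniq (x y : X) : x <+> y = O -> y = -- x.
Proof. intro H. apply (add_cancel_l _ _ x). rewrite H, bl_addN. reflexivity. Qed.
Lemma opp_opp (x : X) : -- -- x = x.
Proof. symmetry. apply inv_uniq. apply addNl. Qed.
Lemma opp_add (x y : X) : -- (x <+> y) = -- x <+> -- y.
Proof. symmetry. apply inv_uniq.
 rewrite (bl_addC _ (--x)), bl_addA, <- (bl_addA _ x), bl_addN, bl_add0, bl_addN. reflexivity. Qed.
Lemma opp0 : -- O = O.
Proof. symmetry; apply inv_uniq; apply bl_add0. Qed.
Lemma scal0l (x : X) : 0 <.> x = O.
Proof. apply (add_cancel_l _ _ (0 <.> x)). rewrite <- bl_scalDl, Rplus_0_r, bl_add0. reflexivity. Qed.
Lemma scal0r (a : R) : a <.> O = O.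
Proof. apply (add_cancel_l _ _ (a <.> O)). rewrite <- bl_scalDr, !bl_add0. reflexivity. Qed.
Lemma scal_opp_r (a : R) (x : X) : a <.> (-- x) = -- (a <.> x).
Proof. apply inv_uniq. rewrite <- bl_scalDr, bl_addN. apply scal0r. Qed.
Lemma scal_opp_l (a : R) (x : X) : (- a) <.> x = -- (a <.> x).
Proof. apply inv_uniq. rewrite <- bl_scalDl, Rplus_opp_r. apply scal0l. Qed.
Lemma scal_m1 (x : X) : (-1) <.> x = -- x.
Proof. replace (-1) with (- (1)) by ring. rewrite scal_opp_l, bl_scal1. reflexivity. Qed.
Lemma opp_scal (x : X) : -- x = (-1) <.> x.
Proof. symmetry; apply scal_m1. Qed.
Lemma scal_sub (a b : R) (x : X) : (a - b) <.> x = a <.> x <+> -- (b <.> x).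
Proof. unfold Rminus. rewrite bl_scalDl, scal_opp_l. reflexivity. Qed.
Lemma add_sub_cancel (x y : X) : x <+> y <+> -- y = x.
Proof. rewrite <- bl_addA, bl_addN, bl_add0. reflexivity. Qed.
Lemma sub_add_cancel (x y : X) : x <+> -- y <+> y = x.
Proof. rewrite <- bl_addA, addNl, bl_add0. reflexivity. Qed.

Lemma le_add_r (x y z : X) : x <<= y -> x <+> z <<= y <+> z.
Proof. apply bl_le_add. Qed.
Lemma le_add_l (x y z : X) : x <<= y -> z <+> x <<= z <+> y.
Proof. intro H. rewrite (bl_addC _ z x), (bl_addC _ z y). apply bl_le_add; exact H. Qed.
Lemma le_add2 (a b c d : X) : a <<= b -> c <<= d -> a <+> c <<= b <+> d.
Proof. intros H1 H2. eapply bl_le_trans. apply le_add_r; exact H1. apply le_add_l; exact H2. Qed.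
Lemma le_add_r_inv (x y z : X) : x <+> z <<= y <+> z -> x <<= y.
Proof. intro H. rewrite <- (add_sub_cancel x z), <- (add_sub_cancel y z). apply le_add_r; exact H. Qed.
Lemma le_opp (x y : X) : x <<= y -> -- y <<= -- x.
Proof. intro H. apply (le_add_r_inv _ _ (x <+> y)).
 rewrite (bl_addA _ (--y) x y), (bl_addC _ (--y) x), <- (bl_addA _ x (--y) y), addNl, bl_add0.
 rewrite bl_addA, addNl, add0l. exact H. Qed.
Lemma le_move_r (x y z : X) : x <+> z <<= y -> x <<= y <+> -- z.
Proof. intro H. rewrite <- (add_sub_cancel x z). apply le_add_r; exact H. Qed.
Lemma le_move_l (x y z : X) : x <<= y <+> -- z -> x <+> z <<= y.
Proof. intro H. rewrite <- (sub_add_cancel y z). apply le_add_r; exact H. Qed.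
Lemma le_0_sub (x y : X) : x <<= y -> O <<= y <+> -- x.
Proof. intro H. apply le_move_r. rewrite add0l; exact H. Qed.
Lemma le_sub_0 (x y : X) : O <<= y <+> -- x -> x <<= y.
Proof. intro H. rewrite <- (add0l x). apply le_move_l; exact H. Qed.
Lemma le_scal_pos (a : R) (x y : X) : 0 <= a -> x <<= y -> a <.> x <<= a <.> y.
Proof. apply bl_le_scal. Qed.
Lemma le_scal_r (a b : R) (x : X) : a <= b -> O <<= x -> a <.> x <<= b <.> x.
Proof. intros H Hx. apply le_sub_0. rewrite <- scal_sub. rewrite <- (scal0r (b - a)).
 apply bl_le_scal; [lra|exact Hx]. Qed.
Lemma scal_pos (a : R) (x : X) : 0 <= a -> O <<= x -> O <<= a <.> x.
Proof. intros Ha Hx. rewrite <- (scal0r a). apply bl_le_scal; auto. Qed.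

Lemma sup_comm (x y : X) : x \v y = y \v x.
Proof. apply bl_le_antisym; apply bl_sup_least; auto using bl_sup_l, bl_sup_r. Qed.
Lemma inf_comm (x y : X) : x \^ y = y \^ x.
Proof. apply bl_le_antisym; apply bl_inf_greatest; auto using bl_inf_l, bl_inf_r. Qed.
Lemma sup_le_eq (x y : X) : x <<= y -> x \v y = y.
Proof. intro H. apply bl_le_antisym. apply bl_sup_least; auto using bl_le_refl. apply bl_sup_r. Qed.
Lemma inf_le_eq (x y : X) : x <<= y -> x \^ y = x.
Proof. intro H. apply bl_le_antisym. apply bl_inf_l. apply bl_inf_greatest; auto using bl_le_refl. Qed.
Lemma sup_mono (a b c d : X) : a <<= b -> c <<= d -> a \v c <<= b \v d.
Proof. intros H1 H2. apply bl_sup_least.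
 eapply bl_le_trans; [exact H1| apply bl_sup_l]. eapply bl_le_trans; [exact H2| apply bl_sup_r]. Qed.
Lemma inf_mono (a b c d : X) : a <<= b -> c <<= d -> a \^ c <<= b \^ d.
Proof. intros H1 H2. apply bl_inf_greatest.
 eapply bl_le_trans; [apply bl_inf_l|exact H1]. eapply bl_le_trans; [apply bl_inf_r|exact H2]. Qed.
Lemma sup_add (x y z : X) : (x \v y) <+> z = (x <+> z) \v (y <+> z).
Proof. apply bl_le_antisym.
 - apply le_move_l. apply bl_sup_least; apply le_move_r; [apply bl_sup_l|apply bl_sup_r].
 - apply bl_sup_least; apply le_add_r; [apply bl_sup_l|apply bl_sup_r]. Qed.
Lemma le_move_r' (x y z : X) : x <+> -- z <<= y -> x <<= y <+> z.
Proof. intro H. rewrite <- (sub_add_cancel x z). apply le_add_r; exact H. Qed.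
Lemma le_move_l' (x y z : X) : x <<= y <+> z -> x <+> -- z <<= y.
Proof. intro H. rewrite <- (add_sub_cancel y z). apply le_add_r; exact H. Qed.
Lemma inf_add (x y z : X) : (x \^ y) <+> z = (x <+> z) \^ (y <+> z).
Proof. apply bl_le_antisym.
 - apply bl_inf_greatest; apply le_add_r; [apply bl_inf_l|apply bl_inf_r].
 - apply le_move_r'. apply bl_inf_greatest; apply le_move_l'; [apply bl_inf_l|apply bl_inf_r]. Qed.
Lemma opp_sup (x y : X) : -- (x \v y) = (-- x) \^ (-- y).
Proof. apply bl_le_antisym.
 - apply bl_inf_greatest; apply le_opp; [apply bl_sup_l|apply bl_sup_r].
 - rewrite <- (opp_opp ((--x) \^ (--y))). apply le_opp. apply bl_sup_least.
   + rewrite <- (opp_opp x) at 1. apply le_opp. apply bl_inf_l.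
   + rewrite <- (opp_opp y) at 1. apply le_opp. apply bl_inf_r. Qed.
Lemma opp_inf (x y : X) : -- (x \^ y) = (-- x) \v (-- y).
Proof. rewrite <- (opp_opp x) at 1. rewrite <- (opp_opp y) at 1. rewrite <- opp_sup. apply opp_opp. Qed.
Lemma sup_inf_sum (x y : X) : (x \v y) <+> (x \^ y) = x <+> y.
Proof.
 assert (E : x \^ y = -- (x \v y) <+> (x <+> y)).
 { rewrite opp_sup, inf_add. rewrite bl_addA, addNl, add0l.
   rewrite (bl_addC _ x y), bl_addA, addNl, add0l. apply inf_comm. }
 rewrite E, bl_addA, bl_addN, add0l. reflexivity. Qed.

Definition ppart (x : X) := x \v O.
Definition negp (x : X) := (-- x) \v O.
Lemma inf0_negp (x : X) : x \^ O = -- negp x.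
Proof. unfold negp. rewrite opp_sup, opp_opp, opp0. reflexivity. Qed.
Lemma pos_eq (x : X) : ppart x = x <+> negp x.
Proof. unfold ppart. apply (add_cancel_r _ _ (x \^ O)). rewrite sup_inf_sum, inf0_negp.
 rewrite add_sub_cancel, bl_add0. reflexivity. Qed.
Lemma pos_inf_negp (x : X) : ppart x \^ negp x = O.
Proof. rewrite pos_eq. rewrite <- (add0l (negp x)) at 2. rewrite <- inf_add, inf0_negp, addNl. reflexivity. Qed.
Lemma pos_ge0 (x : X) : O <<= ppart x.
Proof. apply bl_sup_r. Qed.
Lemma negp_ge0 (x : X) : O <<= negp x.
Proof. apply bl_sup_r. Qed.
Lemma le_pos (x : X) : x <<= ppart x.
Proof. apply bl_sup_l. Qed.
Lemma pos_mono (x y : X) : x <<= y -> ppart x <<= ppart y.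
Proof. intro H. apply sup_mono; auto using bl_le_refl. Qed.

Lemma half_double (a : X) : (/2) <.> (a <+> a) = a.
Proof. rewrite bl_scalDr, <- bl_scalDl. replace (/2 + /2) with 1 by field. apply bl_scal1. Qed.
Lemma le_abs (x : X) : x <<= bl_abs x.
Proof. apply bl_sup_l. Qed.
Lemma le_abs_opp (x : X) : -- x <<= bl_abs x.
Proof. apply bl_sup_r. Qed.
Lemma abs_ge0 (x : X) : O <<= bl_abs x.
Proof. rewrite <- (half_double (bl_abs x)). apply scal_pos; [lra|].
 rewrite <- (bl_addN _ x). apply le_add2; [apply le_abs|apply le_abs_opp]. Qed.
Lemma abs_pos (x : X) : O <<= x -> bl_abs x = x.
Proof. intro H. unfold bl_abs. rewrite sup_comm. apply sup_le_eq.
 eapply bl_le_trans; [|exact H]. rewrite <- opp0. apply le_opp; exact H. Qed.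
Lemma abs_abs (x : X) : bl_abs (bl_abs x) = bl_abs x.
Proof. apply abs_pos, abs_ge0. Qed.
Lemma abs_opp (x : X) : bl_abs (-- x) = bl_abs x.
Proof. unfold bl_abs. rewrite opp_opp. apply sup_comm. Qed.
Lemma abs_le (x a : X) : x <<= a -> -- x <<= a -> bl_abs x <<= a.
Proof. intros; apply bl_sup_least; auto. Qed.
Lemma abs_tri (a b : X) : bl_abs (a <+> b) <<= bl_abs a <+> bl_abs b.
Proof. apply abs_le. apply le_add2; apply le_abs.
 rewrite opp_add. apply le_add2; apply le_abs_opp. Qed.
Lemma abs_scal_le (t : R) (x : X) : 0 <= t -> bl_abs (t <.> x) <<= t <.> bl_abs x.
Proof. intro Ht. apply abs_le. apply bl_le_scal; auto; apply le_abs.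
 rewrite <- scal_opp_r. apply bl_le_scal; auto; apply le_abs_opp. Qed.
Lemma abs_le0 (x : X) : bl_abs x <<= O -> x = O.
Proof. intro H. apply bl_le_antisym. eapply bl_le_trans; [apply le_abs|exact H].
 rewrite <- (opp_opp x). rewrite <- opp0. apply le_opp. eapply bl_le_trans; [apply le_abs_opp|exact H]. Qed.
Lemma le_antisym_0 (x : X) : x <<= O -> O <<= x -> x = O.
Proof. intros; apply bl_le_antisym; auto. Qed.

Lemma norm_abs (x : X) : bl_norm (bl_abs x) = bl_norm x.
Proof. apply Rle_antisym; apply bl_norm_mono; fold (bl_abs (bl_abs x)); fold (bl_abs x);
 rewrite abs_abs; apply bl_le_refl. Qed.
Lemma norm0 : bl_norm O = 0.
Proof. rewrite <- (scal0l O), bl_normZ, Rabs_R0. ring. Qed.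
Lemma norm_opp (x : X) : bl_norm (-- x) = bl_norm x.
Proof. rewrite opp_scal, bl_normZ. rewrite Rabs_left by lra. ring. Qed.
Lemma norm_ge0 (x : X) : 0 <= bl_norm x.
Proof. pose proof (bl_normD X x (-- x)) as H. rewrite bl_addN, norm0, norm_opp in H. lra. Qed.
Lemma norm_mono_pos (a b : X) : O <<= a -> a <<= b -> bl_norm a <= bl_norm b.
Proof. intros Ha Hb. apply bl_norm_mono. fold (bl_abs a); fold (bl_abs b).
 rewrite abs_pos, abs_pos; auto. eapply bl_le_trans; eauto. Qed.
Lemma norm_sub_sym (x y : X) : bl_norm (x <+> -- y) = bl_norm (y <+> -- x).
Proof. rewrite <- norm_opp, opp_add, opp_opp, bl_addC. reflexivity. Qed.
Lemma sub_eq0 (x y : X) : x <+> -- y = O -> x = y.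
Proof. intro H. rewrite <- (sub_add_cancel x y), H, add0l. reflexivity. Qed.
End Alg.

Notation "x <+> y" := (bl_add x y) (at level 50, left associativity).
Notation "a <.> x" := (bl_scal a x) (at level 40).
Notation "x <<= y" := (bl_le x y) (at level 70).
Notation "x \v y" := (bl_sup x y) (at level 45, left associativity).
Notation "x \^ y" := (bl_inf x y) (at level 45, left associativity).
Notation "'--' x" := (bl_opp x) (at level 35, right associativity).

Definition esup {X : BanachLattice} (l : list X) := fold_right (fun a acc => bl_abs a \v acc) (@bl_zero X) l.

Lemma esup_ge0 {X : BanachLattice} (l : list X) : bl_zero <<= esup l.
Proof. induction l as [|a l IH]; simpl. apply bl_le_refl.
 eapply bl_le_trans; [exact IH|apply bl_sup_r]. Qed.

Lemma esup_norm {X : BanachLattice} (HAM : AM_space X) (l : list X) :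
  (forall x, In x l -> bl_norm x <= 1) -> bl_norm (esup l) <= 1.
Proof. induction l as [|a l IH]; simpl; intro H. rewrite norm0; lra.
 assert (Hl : bl_norm (esup l) <= 1). { apply IH. intros; apply H; simpl; auto. }
 rewrite HAM. apply Rmax_lub; auto. rewrite norm_abs. apply H; simpl; auto.
 apply abs_ge0. apply esup_ge0. Qed.

Lemma le_esup {X : BanachLattice} (l : list X) a : In a l -> bl_abs a <<= esup l.
Proof. induction l as [|b l IH]; simpl. tauto.
 intros [->|H]. apply bl_sup_l. eapply bl_le_trans; [apply IH; exact H|apply bl_sup_r]. Qed.

Section Ball.
Variable X : BanachLattice.
Hypothesis HAM : AM_space X.
Variable s : list X.
Hypothesis Hs1 : forall x, In x s -> unit_ball X x.
Hypothesis Hs2 : forall x, unit_ball X x <-> norm_closure (solid_convex_hull (fun y => In y s)) x.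

Definition eunit := esup s.
Lemma eunit_ge0 : bl_zero <<= eunit.
Proof. apply esup_ge0. Qed.
Lemma eunit_norm : bl_norm eunit <= 1.
Proof. apply esup_norm; auto. Qed.
Lemma s_le_eunit a : In a s -> bl_abs a <<= eunit.
Proof. apply le_esup. Qed.

Definition Dset (z : X) := bl_abs z <<= eunit.

Lemma Dset_convex : convex_set Dset.
Proof. intros x y t Hx Hy Ht. unfold Dset in *.
 eapply bl_le_trans; [apply abs_tri|].
 assert (E : eunit = t <.> eunit <+> (1 - t) <.> eunit).
 { rewrite <- bl_scalDl. replace (t + (1 - t)) with 1 by ring. rewrite bl_scal1; reflexivity. }
 rewrite E.
 apply le_add2; (eapply bl_le_trans; [apply abs_scal_le; lra|]); apply bl_le_scal; auto; lra. Qed.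

Lemma Dset_solid : solid_set Dset.
Proof. intros x z Hz H. unfold Dset in *. eapply bl_le_trans; eauto. Qed.

Lemma pos_of_ge0 (z : X) : bl_zero <<= z -> ppart X z = z.
Proof. intro H. unfold ppart. rewrite sup_comm. apply sup_le_eq; exact H. Qed.

Lemma ball_char (y : X) : bl_norm y <= 1 <-> bl_abs y <<= eunit.
Proof. split.
 - intro Hy. apply Hs2 in Hy.
   assert (Hcl : forall eps, eps > 0 -> exists a, Dset a /\ bl_norm (y <+> -- a) < eps).
   { intros eps Heps. destruct (Hy eps Heps) as [a [Ha Hn]]. exists a. split; auto.
     apply Ha. apply Dset_convex. apply Dset_solid. intros z Hz; apply s_le_eunit; exact Hz. }
   set (w := ppart X (bl_abs y <+> -- eunit)).
   assert (Hw : forall eps, eps > 0 -> bl_norm w < eps).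
   { intros eps Heps. destruct (Hcl eps Heps) as [a [Ha Hn]].
     eapply Rle_lt_trans; [|exact Hn]. rewrite <- (norm_abs X (y <+> -- a)). apply norm_mono_pos. apply pos_ge0.
     rewrite <- (pos_of_ge0 (bl_abs (y <+> -- a))) by apply abs_ge0. apply pos_mono.
     apply le_move_l'. eapply bl_le_trans.
     2:{ rewrite bl_addC. apply le_add_r. exact Ha. }
     rewrite <- (sub_add_cancel X y a) at 1. rewrite bl_addC. apply abs_tri. }
   assert (Hw0 : w = bl_zero).
   { apply bl_norm_eq0. pose proof (norm_ge0 X w). destruct (Rle_lt_or_eq_dec 0 (bl_norm w) H) as [Hp|He]; auto.
     specialize (Hw _ Hp). lra. }
   rewrite <- (add0l X eunit). apply le_move_r'. rewrite <- Hw0. apply le_pos.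
 - intro H. eapply Rle_trans; [|apply eunit_norm]. rewrite <- norm_abs. apply norm_mono_pos; auto.
   apply abs_ge0.
Qed.

Lemma norm_le_abs (x : X) : bl_abs x <<= bl_norm x <.> eunit.
Proof. destruct (Req_dec (bl_norm x) 0) as [H0|H0].
 - pose proof (bl_norm_eq0 X x H0) as Hx. rewrite H0, Hx, scal0l. rewrite abs_pos; apply bl_le_refl.
 - pose proof (norm_ge0 X x) as Hn. set (n := bl_norm x) in *.
   assert (Hy : bl_abs ((/n) <.> x) <<= eunit).
   { apply ball_char. rewrite bl_normZ, Rabs_right. unfold n. rewrite Rinv_l by (fold n; lra); lra.
     apply Rle_ge. apply Rlt_le. apply Rinv_0_lt_compat. lra. }
   assert (E : x = n <.> ((/n) <.> x)). { rewrite bl_scalA. replace (n * / n) with 1 by (field; lra). rewrite bl_scal1; reflexivity. }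
   rewrite E at 1. eapply bl_le_trans. apply abs_scal_le; lra. apply bl_le_scal; auto. Qed.

Lemma norm_le_of (x : X) (r : R) : 0 <= r -> bl_abs x <<= r <.> eunit -> bl_norm x <= r.
Proof. intros Hr H. destruct (Req_dec r 0) as [H0|H0].
 - subst r. rewrite scal0l in H. apply abs_le0 in H. subst x. rewrite norm0; lra.
 - assert (Hy : bl_abs ((/r) <.> x) <<= eunit).
   { eapply bl_le_trans. apply abs_scal_le. apply Rlt_le, Rinv_0_lt_compat; lra.
     eapply bl_le_trans. apply bl_le_scal; [apply Rlt_le, Rinv_0_lt_compat; lra|exact H].
     rewrite bl_scalA. replace (/ r * r) with 1 by (field; lra). rewrite bl_scal1. apply bl_le_refl. }
   apply ball_char in Hy. rewrite bl_normZ, Rabs_right in Hy.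
   2: apply Rle_ge, Rlt_le, Rinv_0_lt_compat; lra.
   apply (Rmult_le_compat_l r) in Hy; [|lra]. rewrite <- Rmult_assoc, Rinv_r, Rmult_1_l in Hy; lra. Qed.
End Ball.


Section Unit.
Variable X : BanachLattice.
Variable e : X.
Hypothesis He0 : bl_zero <<= e.
Hypothesis HN1 : forall x : X, bl_abs x <<= bl_norm x <.> e.
Hypothesis HN2 : forall (x : X) r, 0 <= r -> bl_abs x <<= r <.> e -> bl_norm x <= r.
Notation O := (@bl_zero X).

Record ishom (f : X -> R) : Prop := {
  h_add : forall x y, f (x <+> y) = f x + f y;
  h_scal : forall a x, f (a <.> x) = a * f x;
  h_sup : forall x y, f (x \v y) = Rmax (f x) (f y);
  h_e : f e = 1 }.

Section HomFacts.
Variable f : X -> R.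
Hypothesis Hf : ishom f.
Lemma h_zero : f O = 0.
Proof. rewrite <- (scal0l X O), (h_scal _ Hf). ring. Qed.
Lemma h_opp x : f (-- x) = - f x.
Proof. rewrite opp_scal, (h_scal _ Hf). ring. Qed.
Lemma h_sub x y : f (x <+> -- y) = f x - f y.
Proof. rewrite (h_add _ Hf), h_opp. ring. Qed.
Lemma h_mono x y : x <<= y -> f x <= f y.
Proof. intro H. rewrite <- (sup_le_eq X x y H), (h_sup _ Hf). apply Rmax_l. Qed.
Lemma h_inf x y : f (x \^ y) = Rmin (f x) (f y).
Proof. assert (E := sup_inf_sum X x y). apply (f_equal f) in E.
 rewrite !(h_add _ Hf), (h_sup _ Hf) in E. unfold Rmax, Rmin in *.
 destruct (Rle_dec (f x) (f y)); lra. Qed.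
Lemma h_abs x : f (bl_abs x) = Rabs (f x).
Proof. unfold bl_abs. rewrite (h_sup _ Hf), h_opp. unfold Rmax, Rabs.
 destruct (Rle_dec (f x) (- f x)); destruct (Rcase_abs (f x)); lra. Qed.
Lemma h_bound x : Rabs (f x) <= bl_norm x.
Proof. rewrite <- h_abs. eapply Rle_trans. apply h_mono, HN1.
 rewrite (h_scal _ Hf), (h_e _ Hf). lra. Qed.
Lemma h_sube x t : f (x <+> -- (t <.> e)) = f x - t.
Proof. rewrite h_sub, (h_scal _ Hf), (h_e _ Hf). ring. Qed.
End HomFacts.

Definition psup (L : list X) := fold_right (fun a acc => a \v acc) O L.
Lemma psup_ge0 L : O <<= psup L.
Proof. induction L; simpl. apply bl_le_refl. eapply bl_le_trans; [exact IHL|apply bl_sup_r]. Qed.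
Lemma psup_app_l L1 L2 : psup L1 <<= psup (L1 ++ L2).
Proof. induction L1; simpl. apply psup_ge0. apply sup_mono; auto using bl_le_refl. Qed.
Lemma psup_app_r L1 L2 : psup L2 <<= psup (L1 ++ L2).
Proof. induction L1; simpl. apply bl_le_refl. eapply bl_le_trans; [exact IHL1|apply bl_sup_r]. Qed.
Lemma psup_in L p : In p L -> p <<= psup L.
Proof. induction L; simpl. tauto. intros [->|H]. apply bl_sup_l.
 eapply bl_le_trans; [apply IHL; exact H|apply bl_sup_r]. Qed.
Lemma h_psup f (Hf : ishom f) L : (forall p, In p L -> f p <= 0) -> f (psup L) <= 0.
Proof. induction L; simpl; intro H. rewrite (h_zero _ Hf); lra.
 rewrite (h_sup _ Hf). apply Rmax_lub. apply H; auto. apply IHL; intros; apply H; auto. Qed.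

Lemma addACA (a b c d : X) : (a <+> b) <+> (c <+> d) = (a <+> c) <+> (b <+> d).
Proof. rewrite <- !bl_addA. f_equal. rewrite !bl_addA. f_equal. apply bl_addC. Qed.

Record Fam (P : X -> Prop) (Q : X -> Prop) : Prop := {
  F0 : Q O;
  Fadd : forall x y, Q x -> Q y -> Q (x <+> y);
  Fscal : forall a x, 0 <= a -> Q x -> Q (a <.> x);
  Fdown : forall x y, y <<= x -> Q x -> Q y;
  Fsup : forall x y, Q x -> Q y -> Q (x \v y);
  Fprop : forall q, Q q -> ~ e <<= q;
  FP : forall p, P p -> Q p }.

Section HomM.
Variable P : X -> Prop.
Variable M : X -> Prop.
Hypothesis HM : Fam P M.
Hypothesis Mtot : forall x, M x \/ M (-- x).

Definition Aset (x : X) (r : R) := ~ M (x <+> -- (r <.> e)).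

Lemma Mnot_pos_e r : 0 < r -> ~ M (r <.> e).
Proof. intros Hr H. apply (Fscal _ _ HM (/r)) in H; [|apply Rlt_le, Rinv_0_lt_compat; lra].
 rewrite bl_scalA, Rinv_l, bl_scal1 in H by lra. apply (Fprop _ _ HM e H). apply bl_le_refl. Qed.

Lemma Aset_bound x : bound (Aset x).
Proof. exists (bl_norm x). intros r Hr. destruct (Rle_dec r (bl_norm x)) as [H|H]; auto.
 exfalso. apply Hr. apply (Fdown _ _ HM O). 2: apply (F0 _ _ HM).
 rewrite <- (bl_addN X (r <.> e)).
 apply le_add_r. eapply bl_le_trans. apply le_abs. eapply bl_le_trans. apply HN1.
 apply le_scal_r; auto; lra. Qed.

Lemma Aset_low x : Aset x (- bl_norm x - 1).
Proof. intro H. apply (Fprop _ _ HM e). 2: apply bl_le_refl.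
 apply (Fdown _ _ HM (x <+> -- ((- bl_norm x - 1) <.> e)) e). 2: exact H.
 assert (E : e = (1 <.> e)) by (rewrite bl_scal1; reflexivity).
 rewrite E at 1. apply le_move_r. rewrite <- bl_scalDl.
 replace (1 + (- bl_norm x - 1)) with (- bl_norm x) by ring. rewrite scal_opp_l.
 rewrite <- (opp_opp X x) at 2. apply le_opp.
 eapply bl_le_trans. apply le_abs_opp. apply HN1. Qed.

Lemma Aset_ne x : exists r, Aset x r.
Proof. eexists; apply Aset_low. Qed.

Definition psi (x : X) : R := proj1_sig (completeness (Aset x) (Aset_bound x) (Aset_ne x)).
Lemma psi_lub x : is_lub (Aset x) (psi x).
Proof. unfold psi. destruct completeness; auto. Qed.

Lemma Aset_down x r r' : r' <= r -> Aset x r -> Aset x r'.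
Proof. intros Hr HA HM'. apply HA. apply (Fdown _ _ HM (x <+> -- (r' <.> e))). 2: exact HM'.
 apply le_add_l. apply le_opp. apply le_scal_r; auto. Qed.

Lemma psi_lt x r : r < psi x -> Aset x r.
Proof. intro H. apply NNPP; intro Hn. destruct (psi_lub x) as [_ Hl].
 assert (psi x <= r); [|lra]. apply Hl. intros r' Hr'. destruct (Rle_dec r' r); auto.
 exfalso; apply Hn. apply (Aset_down _ r'); auto; lra. Qed.

Lemma psi_gt x r : psi x < r -> M (x <+> -- (r <.> e)).
Proof. intro H. apply NNPP; intro Hn. destruct (psi_lub x) as [Hu _].
 specialize (Hu r Hn). lra. Qed.

Lemma psi_le x c : (forall t, c < t -> M (x <+> -- (t <.> e))) -> psi x <= c.
Proof. intro H. destruct (Rle_dec (psi x) c) as [h|h]; auto. exfalso.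
 apply (psi_lt x ((c + psi x)/2)); [lra|]. apply H; lra. Qed.

Lemma psi_ge x c : (forall t, t < c -> ~ M (x <+> -- (t <.> e))) -> c <= psi x.
Proof. intro H. destruct (Rle_dec c (psi x)) as [h|h]; auto. exfalso.
 apply (H ((c + psi x)/2)); [lra|]. apply psi_gt; lra. Qed.

Lemma psi_zero : psi O = 0.
Proof. apply Rle_antisym.
 - apply psi_le. intros t Ht. apply (Fdown _ _ HM O); [|apply (F0 _ _ HM)].
   rewrite add0l. rewrite <- opp0. apply le_opp. apply scal_pos; auto; lra.
 - apply psi_ge. intros t Ht Hm. rewrite add0l, <- scal_opp_l in Hm. apply (Mnot_pos_e (-t)); auto; lra. Qed.

Lemma psi_subadd x y : psi (x <+> y) <= psi x + psi y.
Proof. apply psi_le. intros t Ht.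
 replace t with ((psi x + (t - psi x - psi y)/2) + (psi y + (t - psi x - psi y)/2)) by field.
 rewrite bl_scalDl, opp_add, addACA. apply (Fadd _ _ HM); apply psi_gt; lra. Qed.

Lemma psi_opp_le x : psi (-- x) <= - psi x.
Proof. apply psi_le. intros t Ht.
 assert (Hl : Aset x (- t)) by (apply psi_lt; lra).
 destruct (Mtot (x <+> -- ((- t) <.> e))) as [H|H]; [contradiction|].
 rewrite opp_add in H. rewrite scal_opp_l, !opp_opp in H. exact H. Qed.

Lemma psi_add x y : psi (x <+> y) = psi x + psi y.
Proof.
 assert (H0 : forall z, psi (-- z) = - psi z).
 { intro z. apply Rle_antisym. apply psi_opp_le.
   pose proof (psi_subadd z (-- z)) as H. rewrite bl_addN, psi_zero in H. lra. }
 apply Rle_antisym. apply psi_subadd.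
 pose proof (psi_subadd (x <+> y) (-- y)) as H. rewrite add_sub_cancel, H0 in H. lra. Qed.

Lemma psi_opp x : psi (-- x) = - psi x.
Proof. pose proof (psi_add x (-- x)) as H. rewrite bl_addN, psi_zero in H. lra. Qed.

Lemma psi_mono x y : x <<= y -> psi x <= psi y.
Proof. intro H. apply psi_le. intros t Ht. apply (Fdown _ _ HM (y <+> -- (t <.> e))).
 apply le_add_r; exact H. apply psi_gt; exact Ht. Qed.

Lemma psi_scal_le a x : 0 < a -> psi (a <.> x) <= a * psi x.
Proof. intro Ha. apply psi_le. intros t Ht.
 assert (E : a <.> x <+> -- (t <.> e) = a <.> (x <+> -- ((t / a) <.> e))).
 { rewrite bl_scalDr, scal_opp_r, bl_scalA. f_equal. f_equal. f_equal. field. lra. }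
 rewrite E. apply (Fscal _ _ HM); [lra|]. apply psi_gt.
 apply (Rmult_lt_reg_l a); auto. unfold Rdiv. rewrite <- Rmult_assoc, (Rmult_comm a t), Rmult_assoc, Rinv_r; lra. Qed.

Lemma psi_scal a x : psi (a <.> x) = a * psi x.
Proof. assert (Hp : forall b y, 0 < b -> psi (b <.> y) = b * psi y).
 { intros b y Hb. apply Rle_antisym. apply psi_scal_le; auto.
   pose proof (psi_scal_le (/ b) (b <.> y)) as H. rewrite bl_scalA, Rinv_l, bl_scal1 in H by lra.
   assert (Hi : 0 < / b) by (apply Rinv_0_lt_compat; lra). specialize (H Hi).
   apply (Rmult_le_compat_l b) in H; [|lra]. rewrite <- Rmult_assoc, Rinv_r, Rmult_1_l in H; lra. }
 destruct (Rtotal_order a 0) as [Hn|[Hz|Hpos]].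
 - replace a with (- (- a)) by ring. rewrite scal_opp_l, psi_opp, Hp; [ring|lra].
 - subst a. rewrite scal0l, psi_zero. ring.
 - apply Hp; auto. Qed.

Lemma psi_sup x y : psi (x \v y) = Rmax (psi x) (psi y).
Proof. apply Rle_antisym.
 - apply psi_le. intros t Ht. rewrite sup_add. apply (Fsup _ _ HM); apply psi_gt;
   [eapply Rle_lt_trans; [apply Rmax_l|exact Ht]|eapply Rle_lt_trans; [apply Rmax_r|exact Ht]].
 - apply Rmax_lub; apply psi_mono; [apply bl_sup_l|apply bl_sup_r]. Qed.

Lemma psi_e : psi e = 1.
Proof. apply Rle_antisym.
 - apply psi_le. intros t Ht. apply (Fdown _ _ HM O); [|apply (F0 _ _ HM)].
   rewrite <- (bl_scal1 X e) at 1. rewrite <- scal_sub. rewrite <- opp0.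
   replace (1 - t) with (- (t - 1)) by ring. rewrite scal_opp_l. apply le_opp. apply scal_pos; auto; lra.
 - apply psi_ge. intros t Ht Hm. rewrite <- (bl_scal1 X e) in Hm at 1. rewrite <- scal_sub in Hm.
   apply (Mnot_pos_e (1 - t)); auto; lra. Qed.

Lemma psi_hom : ishom psi.
Proof. constructor. apply psi_add. apply psi_scal. apply psi_sup. apply psi_e. Qed.

Lemma psi_M p : M p -> psi p <= 0.
Proof. intro H. apply psi_le. intros t Ht. apply (Fdown _ _ HM p); auto.
 rewrite <- (bl_add0 X p) at 2. apply le_add_l. rewrite <- opp0. apply le_opp. apply scal_pos; auto; lra. Qed.

End HomM.
Section Exist.
Variable P : X -> Prop.
Hypothesis HP : forall L lam, (forall p, In p L -> P p) -> 0 <= lam -> ~ e <<= lam <.> psup L.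

Definition Q0 (y : X) := exists L lam, (forall p, In p L -> P p) /\ 0 <= lam /\ y <<= lam <.> psup L.

Lemma Q0_fam : Fam P Q0.
Proof. constructor.
 - exists nil, 0. repeat split; simpl; try tauto; try lra. rewrite scal0l. apply bl_le_refl.
 - intros x y [L1 [l1 [H1 [Hl1 Hx]]]] [L2 [l2 [H2 [Hl2 Hy]]]]. exists (L1 ++ L2), (l1 + l2).
   split. intros p Hp. apply in_app_or in Hp. destruct Hp; auto. split. lra.
   rewrite bl_scalDl. apply le_add2.
   eapply bl_le_trans; [exact Hx|apply bl_le_scal; auto; apply psup_app_l].
   eapply bl_le_trans; [exact Hy|apply bl_le_scal; auto; apply psup_app_r].
 - intros a x Ha [L [l [H1 [Hl Hx]]]]. exists L, (a * l). repeat split; auto.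
   apply Rmult_le_pos; auto. rewrite <- bl_scalA. apply bl_le_scal; auto.
 - intros x y Hyx [L [l [H1 [Hl Hx]]]]. exists L, l. repeat split; auto. eapply bl_le_trans; eauto.
 - intros x y [L1 [l1 [H1 [Hl1 Hx]]]] [L2 [l2 [H2 [Hl2 Hy]]]]. exists (L1 ++ L2), (l1 + l2).
   split. intros p Hp. apply in_app_or in Hp. destruct Hp; auto. split. lra.
   apply bl_sup_least.
   + eapply bl_le_trans; [exact Hx|]. eapply bl_le_trans. apply bl_le_scal; auto; apply psup_app_l.
     apply le_scal_r. lra. apply psup_ge0.
   + eapply bl_le_trans; [exact Hy|]. eapply bl_le_trans. apply bl_le_scal; auto; apply psup_app_r.
     apply le_scal_r. lra. apply psup_ge0.
 - intros q [L [l [H1 [Hl Hq]]]] He. apply (HP L l H1 Hl). eapply bl_le_trans; eauto.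
 - intros p Hp. exists (p :: nil), 1. repeat split; try lra. intros q [<-|[]]; auto.
   rewrite bl_scal1. simpl. apply bl_sup_l. Qed.

Lemma chain_fam (F : (X -> Prop) -> Prop) : (exists A, F A) -> (forall A, F A -> Fam P A) ->
  (forall A B, F A -> F B -> (forall x, A x -> B x) \/ (forall x, B x -> A x)) ->
  Fam P (fun x => exists A, F A /\ A x).
Proof. intros [A0 FA0] HF Htot.
 assert (two : forall x y, (exists A, F A /\ A x) -> (exists A, F A /\ A y) ->
    exists A, F A /\ A x /\ A y).
 { intros x y [A [FA Ax]] [B [FB By]]. destruct (Htot A B FA FB) as [H|H].
   exists B; auto. exists A; auto. }
 constructor.
 - exists A0; split; auto. apply (F0 _ _ (HF _ FA0)).
 - intros x y Hx Hy. destruct (two _ _ Hx Hy) as [A [FA [Ax Ay]]]. exists A; split; auto.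
   apply (Fadd _ _ (HF _ FA)); auto.
 - intros a x Ha [A [FA Ax]]. exists A; split; auto. apply (Fscal _ _ (HF _ FA)); auto.
 - intros x y Hyx [A [FA Ax]]. exists A; split; auto. apply (Fdown _ _ (HF _ FA) x); auto.
 - intros x y Hx Hy. destruct (two _ _ Hx Hy) as [A [FA [Ax Ay]]]. exists A; split; auto.
   apply (Fsup _ _ (HF _ FA)); auto.
 - intros q [A [FA Aq]]. apply (Fprop _ _ (HF _ FA)); auto.
 - intros p Hp. exists A0; split; auto. apply (FP _ _ (HF _ FA0)); auto. Qed.

Section Ext.
Variable M : X -> Prop.
Hypothesis HM : Fam P M.
Variable w : X.
Hypothesis Hw : O <<= w.
Definition Qw (y : X) := exists q lam, M q /\ 0 <= lam /\ y <<= q <+> lam <.> w.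
Lemma Qw_M x : M x -> Qw x.
Proof. intro H. exists x, 0. repeat split; auto; try lra. rewrite scal0l, bl_add0. apply bl_le_refl. Qed.
Lemma Qw_fam : ~ (exists q lam, M q /\ 0 <= lam /\ e <<= q <+> lam <.> w) -> Fam P Qw.
Proof. intro Hn. constructor.
 - apply Qw_M, (F0 _ _ HM).
 - intros x y [q1 [l1 [H1 [Hl1 Hx]]]] [q2 [l2 [H2 [Hl2 Hy]]]]. exists (q1 <+> q2), (l1 + l2).
   split. apply (Fadd _ _ HM); auto. split. lra. rewrite bl_scalDl, addACA. apply le_add2; auto.
 - intros a x Ha [q [l [H1 [Hl Hx]]]]. exists (a <.> q), (a * l). split. apply (Fscal _ _ HM); auto.
   split. apply Rmult_le_pos; auto. rewrite <- bl_scalA, <- bl_scalDr. apply bl_le_scal; auto.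
 - intros x y Hyx [q [l [H1 [Hl Hx]]]]. exists q, l. repeat split; auto. eapply bl_le_trans; eauto.
 - intros x y [q1 [l1 [H1 [Hl1 Hx]]]] [q2 [l2 [H2 [Hl2 Hy]]]]. exists (q1 \v q2), (l1 + l2).
   split. apply (Fsup _ _ HM); auto. split. lra. apply bl_sup_least.
   + eapply bl_le_trans; [exact Hx|]. apply le_add2. apply bl_sup_l. apply le_scal_r; auto; lra.
   + eapply bl_le_trans; [exact Hy|]. apply le_add2. apply bl_sup_r. apply le_scal_r; auto; lra.
 - intros q [q1 [l [H1 [Hl Hq]]]] He. apply Hn. exists q1, l. repeat split; auto. eapply bl_le_trans; eauto.
 - intros p Hp. apply Qw_M, (FP _ _ HM); auto. Qed.
End Ext.

Lemma exist_hom : exists f, ishom f /\ forall p, P p -> f p <= 0.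
Proof.
 destruct (ZW.my_zorn X (Fam P) Q0 O Q0_fam (F0 _ _ Q0_fam)) as [M [HM Hmax]].
 { intros F Hne HF Htot. apply chain_fam; auto. }
 assert (Hext : forall w, O <<= w -> M w \/ exists q lam, M q /\ 0 <= lam /\ e <<= q <+> lam <.> w).
 { intros w Hw. destruct (classic (exists q lam, M q /\ 0 <= lam /\ e <<= q <+> lam <.> w)) as [H|H]; auto.
   left. apply (Hmax (Qw M w)). apply Qw_M. apply Qw_fam; auto.
   exists O, 1. repeat split; try lra. apply (F0 _ _ HM). rewrite add0l, bl_scal1. apply bl_le_refl. }
 assert (Mtot : forall x, M x \/ M (-- x)).
 { intro x. destruct (Hext (ppart X x) (pos_ge0 X x)) as [H1|[q1 [l1 [Hq1 [Hl1 He1]]]]].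
   left. apply (Fdown _ _ HM (ppart X x)); auto. apply le_pos.
   destruct (Hext (negp X x) (negp_ge0 X x)) as [H2|[q2 [l2 [Hq2 [Hl2 He2]]]]].
   right. apply (Fdown _ _ HM (negp X x)); auto. apply le_pos.
   exfalso. set (q := q1 \v q2). set (mu := l1 + l2).
   assert (Hq : M q) by (apply (Fsup _ _ HM); auto).
   assert (B1 : e <+> -- q <<= mu <.> ppart X x).
   { apply le_move_l'. eapply bl_le_trans; [exact He1|]. rewrite bl_addC. apply le_add2.
     apply le_scal_r; [unfold mu; lra|apply pos_ge0]. apply bl_sup_l. }
   assert (B2 : e <+> -- q <<= mu <.> negp X x).
   { apply le_move_l'. eapply bl_le_trans; [exact He2|]. rewrite bl_addC. apply le_add2.
     apply le_scal_r; [unfold mu; lra|apply negp_ge0]. apply bl_sup_r. }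
   apply (Fprop _ _ HM q Hq). rewrite <- (add0l X q). apply le_move_r'.
   destruct (Req_dec mu 0) as [Hm|Hm].
   - rewrite Hm, scal0l in B1. exact B1.
   - assert (Hmu : 0 < mu) by (unfold mu in *; lra).
     assert (E : e <+> -- q = mu <.> ((/mu) <.> (e <+> -- q))).
     { rewrite bl_scalA, Rinv_r, bl_scal1 by lra. reflexivity. }
     rewrite E, <- (scal0r X mu). apply bl_le_scal; [lra|].
     rewrite <- (pos_inf_negp X x). apply bl_inf_greatest.
     + rewrite <- (bl_scal1 X (ppart X x)), <- (Rinv_l mu), <- bl_scalA by lra.
       apply bl_le_scal; auto. apply Rlt_le, Rinv_0_lt_compat; lra.
     + rewrite <- (bl_scal1 X (negp X x)), <- (Rinv_l mu), <- bl_scalA by lra.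
       apply bl_le_scal; auto. apply Rlt_le, Rinv_0_lt_compat; lra. }
 exists (psi P M HM). split. apply (psi_hom P M HM Mtot).
 intros p Hp. apply (psi_M P M HM). apply (FP _ _ HM); auto. Qed.
End Exist.
End Unit.


Section Top.
Variable X : BanachLattice.
Variable e : X.
Hypothesis He0 : bl_zero <<= e.
Hypothesis HN1 : forall x : X, bl_abs x <<= bl_norm x <.> e.
Hypothesis HN2 : forall (x : X) r, 0 <= r -> bl_abs x <<= r <.> e -> bl_norm x <= r.
Notation O := (@bl_zero X).
Notation hom := (ishom X e).

Definition Kt := {f : X -> R | hom f}.
Definition ev (k : Kt) (x : X) : R := proj1_sig k x.
Lemma ev_hom (k : Kt) : hom (ev k).
Proof. exact (proj2_sig k). Qed.

Definition openK (U : Kt -> Prop) : Prop :=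
  forall k, U k -> exists x eps, eps > 0 /\ forall k', Rabs (ev k' x - ev k x) < eps -> U k'.

Lemma nbhd_inter k x1 e1 x2 e2 : e1 > 0 -> e2 > 0 -> exists x eps, eps > 0 /\
  forall k', Rabs (ev k' x - ev k x) < eps ->
     Rabs (ev k' x1 - ev k x1) < e1 /\ Rabs (ev k' x2 - ev k x2) < e2.
Proof. intros H1 H2.
 exists ((/e1) <.> bl_abs (x1 <+> -- (ev k x1 <.> e)) \v (/e2) <.> bl_abs (x2 <+> -- (ev k x2 <.> e))), 1.
 split. lra. intros k' H.
 assert (Hk := ev_hom k). assert (Hk' := ev_hom k').
 rewrite !(h_sup _ _ _ Hk), !(h_scal _ _ _ Hk), !(h_sup _ _ _ Hk'), !(h_scal _ _ _ Hk') in H.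
 rewrite !(h_abs _ _ _ Hk), !(h_abs _ _ _ Hk'), !(h_sube _ _ _ Hk), !(h_sube _ _ _ Hk') in H.
 rewrite !Rminus_diag, Rabs_R0, !Rmult_0_r in H.
 replace (Rmax 0 0) with 0 in H by (unfold Rmax; destruct Rle_dec; lra). rewrite Rminus_0_r in H.
 assert (A : forall a b, Rabs (Rmax a b) < 1 -> a < 1) by
   (intros a b Hab; destruct (Rabs_def2 _ _ Hab); pose proof (Rmax_l a b); lra).
 assert (B : forall a b, Rabs (Rmax a b) < 1 -> b < 1) by
   (intros a b Hab; destruct (Rabs_def2 _ _ Hab); pose proof (Rmax_r a b); lra).
 split.
 - apply A in H. apply (Rmult_lt_compat_l e1) in H; auto.
   rewrite <- Rmult_assoc, Rinv_r, Rmult_1_l, Rmult_1_r in H; lra.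
 - apply B in H. apply (Rmult_lt_compat_l e2) in H; auto.
   rewrite <- Rmult_assoc, Rinv_r, Rmult_1_l, Rmult_1_r in H; lra. Qed.

Lemma openK_full : openK (fun _ => True).
Proof. intros k _. exists O, 1. split; [lra|auto]. Qed.
Lemma openK_inter U V : openK U -> openK V -> openK (fun x => U x /\ V x).
Proof. intros HU HV k [Uk Vk]. destruct (HU k Uk) as [x1 [e1 [He1 H1]]].
 destruct (HV k Vk) as [x2 [e2 [He2 H2]]].
 destruct (nbhd_inter k x1 e1 x2 e2 He1 He2) as [x [eps [Heps H]]].
 exists x, eps. split; auto. intros k' Hk'. destruct (H k' Hk'). split; auto. Qed.
Lemma openK_union (I : Type) (U : I -> Kt -> Prop) : (forall i, openK (U i)) -> openK (fun x => exists i, U i x).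
Proof. intros HU k [i Hi]. destruct (HU i k Hi) as [x [eps [He H]]]. exists x, eps. split; auto.
 intros k' Hk'. exists i; auto. Qed.
Lemma openK_ball k x eps : openK (fun k' => Rabs (ev k' x - ev k x) < eps).
Proof. intros k0 H0. exists x, (eps - Rabs (ev k0 x - ev k x)). split. lra.
 intros k' H'. pose proof (Rabs_triang (ev k' x - ev k0 x) (ev k0 x - ev k x)).
 replace (ev k' x - ev k0 x + (ev k0 x - ev k x)) with (ev k' x - ev k x) in H by ring. lra. Qed.

Definition KT : TopSpace := {| ts_car := Kt; ts_open := openK; ts_open_full := openK_full;
  ts_open_inter := openK_inter; ts_open_union := openK_union |}.

Lemma ev_cont x : continuous_fun (K := KT) (fun k => ev k x).
Proof. intros k eps Heps. exists (fun k' => Rabs (ev k' x - ev k x) < eps). split.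
 apply openK_ball. split. rewrite Rminus_diag, Rabs_R0; lra. auto. Qed.

Lemma scal_inv_cancel (t : R) (z : X) : t <> 0 -> t <.> ((/t) <.> z) = z.
Proof. intro H. rewrite bl_scalA, Rinv_r, bl_scal1 by exact H. reflexivity. Qed.

Lemma inf_scal_le (t : R) (a b : X) : 0 < t -> (t <.> a) \^ (t <.> b) <<= t <.> (a \^ b).
Proof. intro Ht. rewrite <- (scal_inv_cancel t ((t <.> a) \^ (t <.> b))) by lra.
 apply bl_le_scal; [lra|]. assert (Hi : 0 <= / t) by (apply Rlt_le, Rinv_0_lt_compat; lra).
 apply bl_inf_greatest.
 - rewrite <- (bl_scal1 X a) at 2. rewrite <- (Rinv_l t), <- bl_scalA by lra. apply bl_le_scal; auto. apply bl_inf_l.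
 - rewrite <- (bl_scal1 X b) at 2. rewrite <- (Rinv_l t), <- bl_scalA by lra. apply bl_le_scal; auto. apply bl_inf_r. Qed.

Lemma PP (c : R) (u : X) : 0 < c -> c <.> e <<= ppart X u -> c <.> e <<= u.
Proof. intros Hc H. set (n := negp X u).
 assert (Hn0 : O <<= n) by apply negp_ge0.
 assert (Hi : n \^ (c <.> e) <<= O).
 { rewrite <- (pos_inf_negp X u), (inf_comm X (ppart X u)). apply inf_mono. apply bl_le_refl. exact H. }
 set (t := Rmax 1 (bl_norm n / c)).
 assert (Ht1 : 1 <= t) by apply Rmax_l.
 assert (Ht2 : bl_norm n <= t * c).
 { unfold t. apply (Rle_trans _ (bl_norm n / c * c)). right; field; lra.
   apply Rmult_le_compat_r; [lra|apply Rmax_r]. }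
 assert (Hz : n = O).
 { apply bl_le_antisym; auto. eapply bl_le_trans.
   2:{ rewrite <- (scal0r X t). apply bl_le_scal; [lra|exact Hi]. }
   eapply bl_le_trans; [|apply inf_scal_le; lra]. apply bl_inf_greatest.
   - rewrite <- (bl_scal1 X n) at 1. apply le_scal_r; auto.
   - eapply bl_le_trans. apply le_abs. eapply bl_le_trans. apply HN1. rewrite bl_scalA.
     apply le_scal_r; auto. }
 rewrite pos_eq in H. fold n in H. rewrite Hz, bl_add0 in H. exact H. Qed.

Lemma psup_single (y : X) L : (forall p, In p L -> p = y) -> psup X L <<= ppart X y.
Proof. induction L as [|a L IH]; simpl; intro H. apply pos_ge0.
 rewrite (H a) by auto. apply bl_sup_least. apply le_pos. apply IH. intros; apply H; auto. Qed.

Lemma norm_attain (x : X) (eps : R) : 0 < bl_norm x -> 0 < eps ->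
  exists k : Kt, bl_norm x - eps < Rabs (ev k x).
Proof. intros Hx He. set (a := bl_norm x) in *. set (d := Rmin eps a / 2).
 assert (Hd : 0 < d /\ d < a /\ d < eps).
 { unfold d. unfold Rmin; destruct Rle_dec; lra. }
 set (y := (a - d) <.> e <+> -- bl_abs x).
 destruct (exist_hom X e He0 HN1 (fun p => p = y)) as [f [Hf Hfy]].
 { intros L lam HL Hlam Hle.
   assert (H1 : e <<= lam <.> ppart X y).
   { eapply bl_le_trans; [exact Hle|]. apply bl_le_scal; auto. apply psup_single; auto. }
   assert (Hx0 : ~ bl_abs x <<= O).
   { intro H. apply abs_le0 in H. unfold a in Hx. rewrite H, norm0 in Hx. lra. }
   destruct (Req_dec lam 0) as [Hl|Hl].
   - subst lam. rewrite scal0l in H1. apply Hx0. eapply bl_le_trans. apply HN1.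
     rewrite (bl_le_antisym _ _ _ H1 He0), scal0r. apply bl_le_refl.
   - assert (H2 : (/lam) <.> e <<= ppart X y).
     { apply (bl_le_trans _ _ ((/lam) <.> (lam <.> ppart X y))).
       apply bl_le_scal; auto. apply Rlt_le, Rinv_0_lt_compat; lra.
       rewrite bl_scalA, Rinv_l, bl_scal1 by exact Hl; apply bl_le_refl. }
     apply PP in H2; [|apply Rinv_0_lt_compat; lra].
     unfold y in H2. apply le_move_l in H2. rewrite bl_addC in H2. apply le_move_r in H2.
     rewrite <- scal_sub in H2.
     assert (H3 : bl_abs x <<= Rmax (a - d - / lam) 0 <.> e).
     { eapply bl_le_trans; [exact H2|]. apply le_scal_r; auto. apply Rmax_l. }
     apply HN2 in H3; [|apply Rmax_r]. fold a in H3.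
     assert (Rmax (a - d - / lam) 0 < a).
     { assert (0 < / lam) by (apply Rinv_0_lt_compat; lra). unfold Rmax; destruct Rle_dec; lra. }
     lra. }
 specialize (Hfy y eq_refl). unfold y in Hfy.
 rewrite (h_sub _ _ _ Hf), (h_scal _ _ _ Hf), (h_e _ _ _ Hf), (h_abs _ _ _ Hf) in Hfy.
 exists (exist _ f Hf). unfold ev; simpl. lra. Qed.

Lemma sup_bound (v : X) (r : R) : 0 <= r -> (forall k : Kt, Rabs (ev k v) <= r) -> bl_norm v <= r.
Proof. intros Hr H. destruct (Rle_dec (bl_norm v) r) as [h|h]; auto. exfalso.
 destruct (norm_attain v ((bl_norm v - r)/2)) as [k Hk]; try lra.
 specialize (H k). lra. Qed.

Lemma ev_inj (x y : X) : (forall k : Kt, ev k x = ev k y) -> x = y.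
Proof. intro H. apply sub_eq0. apply bl_norm_eq0. apply Rle_antisym; [|apply norm_ge0].
 apply sup_bound. lra. intro k. rewrite (h_sub _ _ _ (ev_hom k)), H, Rminus_diag, Rabs_R0. lra. Qed.

Lemma ev_bound (k : Kt) (x : X) : Rabs (ev k x) <= bl_norm x.
Proof. apply (h_bound _ _ HN1 _ (ev_hom k)). Qed.

Lemma Kt_ext (k1 k2 : Kt) : (forall x, ev k1 x = ev k2 x) -> k1 = k2.
Proof. intro H. destruct k1 as [f1 H1], k2 as [f2 H2]. unfold ev in H; simpl in H.
 assert (f1 = f2) by (apply functional_extensionality; exact H). subst f2.
 f_equal. apply proof_irrelevance. Qed.

Lemma KT_hausdorff : hausdorff_space KT.
Proof. intros k1 k2 Hne. simpl in *.
 destruct (classic (exists x, ev k1 x <> ev k2 x)) as [[x Hx]|Hn].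
 2:{ exfalso. apply Hne. apply Kt_ext. intro x. apply NNPP. intro h. apply Hn. exists x; auto. }
 set (d := Rabs (ev k1 x - ev k2 x) / 2).
 assert (Hd : 0 < d). { unfold d. assert (ev k1 x - ev k2 x <> 0) by lra. pose proof (Rabs_pos_lt _ H). lra. }
 exists (fun k => Rabs (ev k x - ev k1 x) < d), (fun k => Rabs (ev k x - ev k2 x) < d).
 split. apply openK_ball. split. apply openK_ball.
 split. rewrite Rminus_diag, Rabs_R0; lra. split. rewrite Rminus_diag, Rabs_R0; lra.
 intros z [H1 H2]. pose proof (Rabs_triang (ev k1 x - ev z x) (ev z x - ev k2 x)).
 replace (ev k1 x - ev z x + (ev z x - ev k2 x)) with (ev k1 x - ev k2 x) in H by ring.
 rewrite Rabs_minus_sym in H1. unfold d in *. lra. Qed.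

Lemma ev_bump (k k' : Kt) (x : X) (eps : R) :
  ev k' (e <+> -- ((/eps) <.> bl_abs (x <+> -- (ev k x <.> e)))) = 1 - / eps * Rabs (ev k' x - ev k x).
Proof. assert (Hk' := ev_hom k'). rewrite (h_sub _ _ _ Hk'), (h_e _ _ _ Hk'), (h_scal _ _ _ Hk'),
 (h_abs _ _ _ Hk'), (h_sube _ _ _ Hk'). reflexivity. Qed.

Lemma KT_compact : compact_space KT.
Proof. intros I U HU Hcov. simpl in *. apply NNPP; intro Hn.
 assert (Hn' : forall l, exists k : Kt, forall i, In i l -> ~ U i k).
 { intro l. apply NNPP; intro h. apply Hn. exists l. intro k. apply NNPP; intro h2. apply h.
   exists k. intros i Hi HUi. apply h2. exists i; auto. }
 set (P := fun p => exists (k : Kt) i x eps, U i k /\ eps > 0 /\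
    (forall k', Rabs (ev k' x - ev k x) < eps -> U i k') /\
    p = e <+> -- ((/eps) <.> bl_abs (x <+> -- (ev k x <.> e)))).
 assert (Hkey : forall L, (forall p, In p L -> P p) -> exists l, forall k',
    (forall i, In i l -> ~ U i k') -> forall p, In p L -> ev k' p <= 0).
 { induction L as [|p L IH]; intro HL. exists nil. intros k' _ p []. 
   destruct IH as [l Hl]. intros; apply HL; simpl; auto.
   destruct (HL p (or_introl eq_refl)) as [k [i [x [eps [HUi [Heps [Hnb Hp]]]]]]].
   exists (i :: l). intros k' Hk' q [<-|Hq].
   - rewrite Hp, ev_bump. assert (~ Rabs (ev k' x - ev k x) < eps).
     { intro h. apply (Hk' i); simpl; auto. }
     assert (eps <= Rabs (ev k' x - ev k x)) by lra.
     apply (Rmult_le_compat_l (/eps)) in H0; [|apply Rlt_le, Rinv_0_lt_compat; lra].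
     rewrite Rinv_l in H0; lra.
   - apply (Hl k'); auto. intros i' Hi'. apply Hk'; simpl; auto. }
 destruct (exist_hom X e He0 HN1 P) as [f [Hf Hfp]].
 { intros L lam HL Hlam Hle. destruct (Hkey L HL) as [l Hl]. destruct (Hn' l) as [k Hk].
   specialize (Hl k Hk). assert (Hk0 := ev_hom k).
   apply (h_mono _ _ _ Hk0) in Hle. rewrite (h_e _ _ _ Hk0), (h_scal _ _ _ Hk0) in Hle.
   pose proof (h_psup _ _ _ Hk0 L Hl). assert (lam * ev k (psup X L) <= 0).
   { apply (Rmult_le_compat_l lam) in H; auto. lra. } lra. }
 set (k0 := exist _ f Hf : Kt).
 destruct (Hcov k0) as [i Hi]. destruct (HU i k0 Hi) as [x [eps [Heps Hnb]]].
 assert (HPp : P (e <+> -- ((/eps) <.> bl_abs (x <+> -- (ev k0 x <.> e))))).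
 { exists k0, i, x, eps. auto. }
 specialize (Hfp _ HPp). change f with (ev k0) in Hfp. rewrite ev_bump in Hfp.
 rewrite Rminus_diag, Rabs_R0, Rmult_0_r in Hfp. lra. Qed.
Lemma cont_sub (h1 h2 : Kt -> R) : continuous_fun (K := KT) h1 -> continuous_fun (K := KT) h2 ->
  continuous_fun (K := KT) (fun k => h1 k - h2 k).
Proof. intros H1 H2 k eps Heps. destruct (H1 k (eps/2)) as [U1 [O1 [U1k HU1]]]; [lra|].
 destruct (H2 k (eps/2)) as [U2 [O2 [U2k HU2]]]; [lra|].
 exists (fun x => U1 x /\ U2 x). split. apply (openK_inter U1 U2 O1 O2). split; auto.
 intros y [Hy1 Hy2]. specialize (HU1 y Hy1). specialize (HU2 y Hy2).
 pose proof (Rabs_triang (h1 y - h1 k) (-(h2 y - h2 k))). rewrite Rabs_Ropp in H.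
 replace (h1 y - h1 k + - (h2 y - h2 k)) with (h1 y - h2 y - (h1 k - h2 k)) in H by ring. lra. Qed.

Lemma cont_open (h : Kt -> R) (c : R) : continuous_fun (K := KT) h -> openK (fun k => c < h k).
Proof. intros Hh k Hk. destruct (Hh k (h k - c)) as [U [OU [Uk HU]]]; [lra|].
 destruct (OU k Uk) as [x [eps [Heps Hn]]]. exists x, eps. split; auto.
 intros k' Hk'. specialize (HU k' (Hn k' Hk')). apply Rabs_def2 in HU. lra. Qed.

Section Surj.
Variable f : Kt -> R.
Hypothesis Hf : continuous_fun (K := KT) f.

Lemma two_point (k1 k2 : Kt) : exists y, ev k1 y = f k1 /\ ev k2 y = f k2.
Proof. destruct (classic (exists x, ev k1 x <> ev k2 x)) as [[x Hx]|Hn].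
 - set (a := (f k1 - f k2) / (ev k1 x - ev k2 x)). set (b := f k1 - a * ev k1 x).
   exists (a <.> x <+> b <.> e).
   assert (H1 := ev_hom k1). assert (H2 := ev_hom k2).
   rewrite (h_add _ _ _ H1), (h_add _ _ _ H2), !(h_scal _ _ _ H1), !(h_scal _ _ _ H2), (h_e _ _ _ H1), (h_e _ _ _ H2).
   unfold b, a. split; field; lra.
 - assert (k1 = k2). { apply Kt_ext. intro x. apply NNPP. intro h. apply Hn. exists x; auto. }
   subst k2. exists (f k1 <.> e). rewrite (h_scal _ _ _ (ev_hom k1)), (h_e _ _ _ (ev_hom k1)). split; ring. Qed.

Definition fsup (b : X) (l : list X) := fold_right (fun a acc => a \v acc) b l.
Definition finf (b : X) (l : list X) := fold_right (fun a acc => a \^ acc) b l.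
Lemma fsup_ge b l y : In y l -> y <<= fsup b l.
Proof. induction l; simpl. tauto. intros [<-|H]. apply bl_sup_l. eapply bl_le_trans; [apply IHl; auto|apply bl_sup_r]. Qed.
Lemma fsup_base b l : b <<= fsup b l.
Proof. induction l; simpl. apply bl_le_refl. eapply bl_le_trans; [apply IHl|apply bl_sup_r]. Qed.
Lemma finf_le b l y : In y l -> finf b l <<= y.
Proof. induction l; simpl. tauto. intros [<-|H]. apply bl_inf_l. eapply bl_le_trans; [apply bl_inf_r|apply IHl; auto]. Qed.
Lemma finf_base b l : finf b l <<= b.
Proof. induction l; simpl. apply bl_le_refl. eapply bl_le_trans; [apply bl_inf_r|apply IHl]. Qed.

Lemma stepA (phi : Kt) (eps : R) : eps > 0 -> exists g, ev phi g = f phi /\ forall chi, f chi - eps < ev chi g.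
Proof. intro He.
 set (I := {y : X | ev phi y = f phi}).
 destruct (KT_compact I (fun y chi => f chi - eps < ev chi (proj1_sig y))) as [l Hl].
 - intro y. simpl. pose proof (cont_open _ (- eps) (cont_sub _ _ (ev_cont (proj1_sig y)) Hf)) as H.
   intros k Hk. destruct (H k) as [x [d [Hd Hx]]]. simpl; lra.
   exists x, d. split; auto. intros k' Hk'. specialize (Hx k' Hk'). simpl in Hx. lra.
 - intro chi. destruct (two_point phi chi) as [y [Hy1 Hy2]]. exists (exist _ y Hy1). simpl. lra.
 - exists (fsup (f phi <.> e) (map (@proj1_sig _ _) l)). split.
   + assert (Hp := ev_hom phi). clear Hl. induction l as [|[y Hy] l IH]; simpl.
     rewrite (h_scal _ _ _ Hp), (h_e _ _ _ Hp). ring.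
     rewrite (h_sup _ _ _ Hp), IH, Hy. unfold Rmax; destruct Rle_dec; lra.
   + intro chi. destruct (Hl chi) as [[y Hy] [Hin Hc]]. simpl in Hc.
     eapply Rlt_le_trans; [exact Hc|]. apply (h_mono _ _ _ (ev_hom chi)). apply fsup_ge.
     apply (in_map (@proj1_sig _ _)) in Hin. exact Hin. Qed.

Lemma approx (eps : R) : eps > 0 -> exists x, forall chi, Rabs (ev chi x - f chi) < eps.
Proof. intro He.
 set (I := {g : X | forall chi, f chi - eps < ev chi g}).
 destruct (KT_compact I (fun g chi => ev chi (proj1_sig g) < f chi + eps)) as [l Hl].
 - intro g. simpl. pose proof (cont_open _ (- eps) (cont_sub _ _ Hf (ev_cont (proj1_sig g)))) as H.
   intros k Hk. destruct (H k) as [x [d [Hd Hx]]]. simpl; lra.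
   exists x, d. split; auto. intros k' Hk'. specialize (Hx k' Hk'). simpl in Hx. lra.
 - intro chi. destruct (stepA chi eps He) as [g [Hg1 Hg2]]. exists (exist _ g Hg2). simpl. lra.
 - destruct l as [|g0 l].
   + exists (@bl_zero X). intro chi. destruct (Hl chi) as [i [[] _]].
   + exists (finf (proj1_sig g0) (map (@proj1_sig _ _) l)). intro chi.
     assert (Hlow : f chi - eps < ev chi (finf (proj1_sig g0) (map (@proj1_sig _ _) l))).
     { assert (Hc := ev_hom chi). clear Hl. induction l as [|[y Hy] l IH]; simpl.
       destruct g0 as [g Hg]; simpl; auto.
       rewrite (h_inf _ _ _ Hc). unfold Rmin. specialize (Hy chi). destruct Rle_dec; lra. }
     destruct (Hl chi) as [[y Hy] [Hin Hc]]. simpl in Hc.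
     assert (Hup : ev chi (finf (proj1_sig g0) (map (@proj1_sig _ _) l)) <= ev chi y).
     { apply (h_mono _ _ _ (ev_hom chi)). destruct Hin as [Heq|Hin]. subst g0; simpl; apply finf_base.
       apply finf_le. apply (in_map (@proj1_sig _ _)) in Hin. exact Hin. }
     apply Rabs_def1; lra. Qed.
Lemma small_inv (eps : R) : eps > 0 -> exists N : nat, forall n, (n >= N)%nat -> / (INR n + 1) < eps.
Proof. intro He. destruct (archimed (/ eps)) as [H1 _].
 assert (Hp : 0 < / eps) by (apply Rinv_0_lt_compat; lra).
 exists (Z.to_nat (up (/ eps))). intros n Hn.
 assert (Hz : (0 <= up (/eps))%Z) by (apply le_IZR; lra).
 apply le_INR in Hn. rewrite INR_IZR_INZ, Z2Nat.id in Hn by exact Hz.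
 assert (/ eps < INR n + 1) by lra.
 rewrite <- (Rinv_inv eps). apply Rinv_lt_contravar; auto.
 apply Rmult_lt_0_compat; lra. Qed.

Lemma inv_pos_nat (n : nat) : 0 < / (INR n + 1).
Proof. apply Rinv_0_lt_compat. pose proof (pos_INR n); lra. Qed.

Lemma surj : exists x, forall k, ev k x = f k.
Proof.
 assert (Hs : forall n : nat, {x : X | forall chi, Rabs (ev chi x - f chi) < / (INR n + 1)}).
 { intro n. apply constructive_indefinite_description. apply approx. apply inv_pos_nat. }
 set (xs := fun n => proj1_sig (Hs n)).
 assert (Hxs : forall n chi, Rabs (ev chi (xs n) - f chi) < / (INR n + 1)).
 { intros n chi. unfold xs. destruct (Hs n); simpl; auto. }
 assert (Hd : forall n m, bl_norm (xs n <+> -- xs m) <= / (INR n + 1) + / (INR m + 1)).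
 { intros n m. apply sup_bound.
   pose proof (inv_pos_nat n); pose proof (inv_pos_nat m); lra.
   intro k. rewrite (h_sub _ _ _ (ev_hom k)).
   pose proof (Hxs n k). pose proof (Hxs m k).
   pose proof (Rabs_triang (ev k (xs n) - f k) (-(ev k (xs m) - f k))) as H1. rewrite Rabs_Ropp in H1.
   replace (ev k (xs n) - f k + - (ev k (xs m) - f k)) with (ev k (xs n) - ev k (xs m)) in H1 by ring.
   lra. }
 destruct (bl_complete X xs) as [l Hl].
 { intros eps Heps. destruct (small_inv (eps / 2)) as [N HN]; [lra|]. exists N. intros n m Hn Hm.
   specialize (Hd n m). specialize (HN n Hn) as H1. specialize (HN m Hm). lra. }
 exists l. intro k.
 assert (Hz : forall d, d > 0 -> Rabs (ev k l - f k) <= d).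
 { intros d Hdd. destruct (Hl (d / 2)) as [N1 HN1']; [lra|].
   destruct (small_inv (d / 2)) as [N2 HN2']; [lra|].
   set (n := max N1 N2). specialize (HN1' n (Nat.le_max_l _ _)). specialize (HN2' n (Nat.le_max_r _ _)).
   pose proof (Hxs n k) as H3. pose proof (ev_bound k (xs n <+> -- l)) as H4.
   rewrite (h_sub _ _ _ (ev_hom k)) in H4.
   pose proof (Rabs_triang (ev k l - ev k (xs n)) (ev k (xs n) - f k)) as H5.
   replace (ev k l - ev k (xs n) + (ev k (xs n) - f k)) with (ev k l - f k) in H5 by ring.
   rewrite Rabs_minus_sym in H4. lra. }
 destruct (Req_dec (ev k l - f k) 0) as [H|H]; [lra|].
 exfalso. pose proof (Rabs_pos_lt _ H). specialize (Hz (Rabs (ev k l - f k) / 2)). lra. Qed.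
End Surj.
Lemma represent : exists (K : TopSpace) (T : X -> K -> R),
    compact_space K /\ hausdorff_space K /\ lattice_isometry_onto_CK X K T.
Proof. exists KT, (fun x k => ev k x). split. apply KT_compact. split. apply KT_hausdorff.
 repeat split.
 - intro x. apply ev_cont.
 - intros x y k. apply (h_add _ _ _ (ev_hom k)).
 - intros a x k. apply (h_scal _ _ _ (ev_hom k)).
 - intros x y H. apply ev_inj. exact H.
 - intros g Hg. apply (surj g Hg).
 - intros x y k. apply (h_sup _ _ _ (ev_hom k)).
 - intros x y k. apply (h_inf _ _ _ (ev_hom k)).
 - intros z [->|[k ->]]. apply norm_ge0. apply ev_bound.
 - intros b Hb. assert (H0 : 0 <= b) by (apply Hb; left; reflexivity).
   destruct (Rle_dec (bl_norm x) b) as [h|h]; auto. exfalso.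
   destruct (norm_attain x (bl_norm x - b)) as [k Hk]; try lra.
   assert (Rabs (ev k x) <= b) by (apply Hb; right; exists k; reflexivity). lra. Qed.
End Top.

Theorem mainTheorem14 (X : BanachLattice) (HAM : AM_space X)
  (Hball : exists s : list X,
      (forall x, In x s -> unit_ball X x) /\
      (forall x, unit_ball X x <-> norm_closure (solid_convex_hull (fun y => In y s)) x)) :
  exists (K : TopSpace) (T : X -> K -> R),
    compact_space K /\ hausdorff_space K /\ lattice_isometry_onto_CK X K T.
Proof.
  destruct Hball as [s [Hs1 Hs2]].
  apply (represent X (eunit X s)).
  - apply eunit_ge0.
  - apply (norm_le_abs X HAM s Hs1 Hs2).
  - apply (norm_le_of X HAM s Hs1 Hs2).
Qed.
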